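(* Let $h:\mathcal S\to\mathbb R$ be bounded, $\lambda\in[0,1]$, $\pi$ any policy and $\epsilon\ge0$. If $\inf_{b\in\mathbb R}\|h+b-V^*\|_\infty\le\epsilon$, then $$\mathrm{Bias}(h,\lambda,\pi)\le\frac{(1-\lambda\gamma)^2}{(1-\gamma)^2}\,\epsilon.$$
   Context: Let $\mathcal M=(\mathcal S,\mathcal A,P,r,\gamma)$ be a discounted MDP with transition kernel $P(\cdot|s,a)$, reward $r:\mathcal S\times\mathcal A\to[0,1]$ and discount $\gamma\in[0,1)$. A policy $\pi$ is a Markov kernel from $\mathcal S$ to distributions on $\mathcal A$; $\rho^\pi(s)$ (resp. $\rho^\pi(d_0)$) is the trajectory law with $s_0=s$ (resp. $s_0\sim d_0$), $a_t\sim\pi(\cdot|s_t)$, $s_{t+1}\sim P(\cdot|s_t,a_t)$. $V^\pi(s)=\mathbb E_{\rho^\pi(s)}[\sum_t\gamma^tr(s_t,a_t)]$; $V^*=V^{\pi^*}=\sup_\pi V^\pi$ for an optimal policy $\pi^*$ (assumed to exist). For $V:\mathcal S\to\mathbb R$ and a distribution $d$, $V(d)=\mathbb E_{s\sim d}[V(s)]$. A fixed initial distribution $d_0$ is given; $d_t^\pi$ is the law of $s_t$ under $\rho^\pi(d_0)$, $d^\pi=(1-\gamma)\sum_t\gamma^td_t^\pi$, $d^\pi(s,a)=d^\pi(s)\pi(a|s)$. Reshaped MDP: $\widetilde{\mathcal M}=(\mathcal S,\mathcal A,P,\widetilde r,\lambda\gamma)$ with $\widetilde r(s,a)=r(s,a)+(1-\lambda)\gamma\,\mathbb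 E_{s'\sim P(\cdot|s,a)}[h(s')]$; $\widetilde V^\pi(s)=\mathbb E_{\rho^\pi(s)}[\sum_t(\lambda\gamma)^t\widetilde r(s_t,a_t)]$; $\widetilde V^*=\sup_\pi\widetilde V^\pi$ (attained). The bias is $$\mathrm{Bias}(h,\lambda,\pi):=\big(V^*(d_0)-\widetilde V^*(d_0)\big)+\frac{\gamma(1-\lambda)}{1-\gamma}\,\mathbb E_{(s,a)\sim d^\pi}\,\mathbb E_{s'\sim P(\cdot|s,a)}\big[h(s')-\widetilde V^*(s')\big].$$ *)

(* Defs.v *)
From HB Require Import structures.
From mathcomp Require Import all_boot all_order all_algebra.
From mathcomp Require Import all_classical all_reals all_analysis.
Set Implicit Arguments. Unset Strict Implicit. Unset Printing Implicit Defensive.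
Import Order.TTheory GRing.Theory Num.Theory.
Local Open Scope classical_set_scope.
Local Open Scope ring_scope.

Section MDP.
Context {R : realType} {dS dA : measure_display}
  {S : measurableType dS} {A : measurableType dA}.

Notation trans := (R.-pker (S * A)%type ~> S).
Notation policy := (R.-pker S ~> A).

Definition Pop (P : trans) (pi : policy) (f : S -> R) : S -> R :=
  fun s => \int[pi s]_(a in setT) (\int[P (s, a)]_(s' in setT) f s').

Definition polavg (pi : policy) (G : S -> A -> R) : S -> R :=
  fun s => \int[pi s]_(a in setT) G s a.

(* discounted value  V^pi(s) = E_{rho^pi(s)} [ sum_t g^t rr(s_t,a_t) ]
   = sum_t g^t E[rr(s_t,a_t) | s_0 = s], the expectation of the t-th term
   being computed through the t-fold iterated kernel. *)
Definition value (g : R) (P : trans) (rr : S -> A -> R) (pi : policy) : S -> R :=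
  fun s => limn (fun n => \sum_(0 <= t < n)
                  g ^+ t * iter t (Pop P pi) (polavg pi rr) s).

Definition at_dist (d : probability S R) (V : S -> R) : R :=
  \int[d]_(s in setT) V s.

(* E_{(s,a) ~ d^pi} G(s,a), where d^pi = (1-g) sum_t g^t d_t^pi (x) pi
   and d_t^pi is the law of s_t under rho^pi(d0) *)
Definition occ_exp (g : R) (P : trans) (d0 : probability S R) (pi : policy)
  (G : S -> A -> R) : R :=
  (1 - g) * limn (fun n => \sum_(0 <= t < n)
     g ^+ t * at_dist d0 (iter t (Pop P pi) (polavg pi G))).

Definition reshaped_reward (g lam : R) (P : trans) (r : S -> A -> R) (h : S -> R)
  : S -> A -> R :=
  fun s a => r s a + (1 - lam) * g * \int[P (s, a)]_(s' in setT) h s'.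

Definition Bias (g lam : R) (P : trans) (d0 : probability S R) (h : S -> R)
  (Vstar Vtstar : S -> R) (pi : policy) : R :=
  (at_dist d0 Vstar - at_dist d0 Vtstar)
  + g * (1 - lam) / (1 - g) *
    occ_exp g P d0 pi (fun s a => \int[P (s, a)]_(s' in setT) (h s' - Vtstar s')).

End MDP.

(* Main.v *)
Require Import Defs.
From HB Require Import structures.
From mathcomp Require Import all_boot all_order all_algebra.
From mathcomp Require Import all_classical all_reals all_analysis.
From mathcomp Require Import measurable_realfun.
From mathcomp Require Import ring lra.
Import Order.TTheory GRing.Theory Num.Theory.
Local Open Scope classical_set_scope.
Local Open Scope ring_scope.
Set Implicit Arguments. Unset Strict Implicit. Unset Printing Implicit Defensive.

Section Integ.
Context {R : realType} d (T : measurableType d) (mu : {measure set T -> \bar R}).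
Hypothesis mu1 : mu setT = 1%E.

Definition bmeas (f : T -> R) := measurable_fun setT f /\ exists M, forall x, `|f x| <= M.

Lemma bm_int f : bmeas f -> mu.-integrable setT (EFin \o f).
Proof.
move=> [mf [M hM]]; apply/integrableP; split; first exact/measurable_EFinP.
have M0 : 0 <= M by apply: le_trans (hM point); rewrite normr_ge0.
apply: (@le_lt_trans _ _ (M%:E * mu setT)%E).
  apply: integral_le_bound => //; first exact/measurable_EFinP.
  by apply: aeW => x _ /=; rewrite lee_fin hM.
by rewrite mu1 mule1 ltry.
Qed.

Lemma bm_cst c : \int[mu]_(x in setT) c = c.
Proof. by rewrite Rintegral_cst // mu1 /= mulr1. Qed.

Lemma bm_le f g : bmeas f -> bmeas g -> (forall x, f x <= g x) ->
  \int[mu]_(x in setT) f x <= \int[mu]_(x in setT) g x.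
Proof. by move=> bf bg fg; apply: le_Rintegral => //; apply: bm_int. Qed.

Lemma bm_add f g : bmeas f -> bmeas g ->
  \int[mu]_(x in setT) (f x + g x) = \int[mu]_(x in setT) f x + \int[mu]_(x in setT) g x.
Proof. by move=> bf bg; apply: RintegralD => //; apply: bm_int. Qed.

Lemma bm_scale c f : bmeas f ->
  \int[mu]_(x in setT) (c * f x) = c * \int[mu]_(x in setT) f x.
Proof. by move=> bf; apply: RintegralZl => //; apply: bm_int. Qed.

End Integ.

Lemma kint {R : realType} d1 d2 (X : measurableType d1) (Y : measurableType d2)
  (k : R.-pker X ~> Y) (F : X * Y -> R) (M : R) :
  measurable_fun setT F -> (forall z, `|F z| <= M) ->
  bmeas (fun x => \int[k x]_(y in setT) F (x, y)) /\
  (forall x, `|\int[k x]_(y in setT) F (x, y)| <= M).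
Proof.
move=> mF hM.
have k1 x : k x setT = 1%E by apply: prob_kernel.
have bF x : bmeas (fun y => F (x, y)).
  split; last by exists M.
  apply: measurableT_comp => //; exact: measurable_pair1.
have bnd x : `|\int[k x]_(y in setT) F (x, y)| <= M.
  have M0 : 0 <= M by apply: le_trans (hM (x, point)).
  rewrite ler_norml; apply/andP; split.
    rewrite -[X in X <= _](bm_cst (k1 x)); apply: bm_le => //.
      by split; [exact: measurable_cst | exists `|- M|].
    by move=> y; have := hM (x, y); rewrite ler_norml => /andP[].
  rewrite -[X in _ <= X](bm_cst (k1 x) M); apply: bm_le => //.
    by split; [exact: measurable_cst | exists `|M|].
  by move=> y; have := hM (x, y); rewrite ler_norml => /andP[].
split => //; split; last by exists M.
have E : (fun x => \int[k x]_(y in setT) F (x, y)) =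
  (fun x => fine (\int[k x]_y ((F (x, y) + M)%:E))%E - M).
  apply/funext => x.
  have -> : fine (\int[k x]_y ((F (x, y) + M)%:E))%E = \int[k x]_(y in setT) (F (x, y) + M) by [].
  rewrite bm_add //; first by rewrite bm_cst // addrK.
  by split; [exact: measurable_cst | exists `|M|].
rewrite E; apply: measurable_funB => //; apply: measurableT_comp => //.
apply: (measurable_fun_integral_finite_kernel (fun z => (F z + M)%:E)).
  move=> z; rewrite lee_fin -lerBlDr sub0r.
  by have := hM z; rewrite ler_norml => /andP[].
apply/measurable_EFinP; apply: measurable_funD => //; exact: measurable_cst.
Qed.

Section Ser.
Context {R : realType}.
Variable be : R.
Hypothesis be0 : 0 <= be.
Hypothesis be1 : be < 1.

Lemma powcvg0 K : (fun n => K * be ^+ n) @ \oo --> 0.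
Proof.
rewrite -(mulr0 K); apply: cvgMr; apply: cvg_expr.
by rewrite ger0_norm.
Qed.

Lemma eps_le x y K : (forall n, x <= y + K * be ^+ n) -> x <= y.
Proof.
move=> H.
have C : (fun n => y + K * be ^+ n) @ \oo --> y.
  rewrite -[X in _ --> X]addr0; apply: cvgD; [exact: cvg_cst | exact: powcvg0].
rewrite -(cvg_lim _ C) //; apply: limr_ge; first by apply/cvgP: C.
by near=> n; apply: H.
Unshelve. all: by end_near.
Qed.

Lemma geo_tail n m : (n <= m)%N ->
  (1 - be) * \sum_(n <= t < m) be ^+ t = be ^+ n - be ^+ m.
Proof.
elim: m => [|m IH]; first by rewrite leqn0 => /eqP ->; rewrite big_geq // mulr0 subrr.
rewrite leq_eqVlt => /orP[/eqP ->|]; first by rewrite big_geq // mulr0 subrr.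
rewrite ltnS => nm; rewrite big_nat_recr //= mulrDr IH // exprS.
ring.
Qed.

Lemma geo_tail_le n m : (1 - be) * \sum_(n <= t < m) be ^+ t <= be ^+ n.
Proof.
case: (leqP n m) => nm; first by rewrite geo_tail // lerBlDr lerDl exprn_ge0.
by rewrite big_geq ?mulr0 ?exprn_ge0 // ltnW.
Qed.

Variable a : nat -> R.
Variable B : R.
Hypothesis ha : forall t, `|a t| <= B * be ^+ t.

Definition psum n := \sum_(0 <= t < n) a t.

Lemma psum_cvg : cvgn psum.
Proof.
apply: normed_cvg.
apply: (@series_le_cvg _ _ (geometric B be)).
- by move=> n /=; rewrite normr_ge0.
- by move=> n; rewrite /geometric /=; exact: le_trans (normr_ge0 (a n)) (ha n).
- by move=> n; rewrite /geometric /=; exact: ha.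
- by apply: is_cvg_geometric_series; rewrite ger0_norm.
Qed.

Lemma psum_diff n m : (n <= m)%N -> `|psum m - psum n| <= B * be ^+ n / (1 - be).
Proof.
move=> nm; rewrite /psum (@big_cat_nat _ _ _ n 0 m) //= addrAC subrr add0r.
have b1 : 0 < 1 - be by rewrite subr_gt0.
apply: le_trans (ler_norm_sum _ _ _) _.
apply: le_trans (ler_sum _ (fun t _ => ha t)) _.
rewrite -mulr_sumr ler_pdivlMr // mulrAC [_ * (1 - be)]mulrC.
have B0 : 0 <= B by have := ha 0%N; rewrite expr0 mulr1; apply: le_trans.
by rewrite [_ * B]mulrC -mulrA ler_wpM2l // geo_tail_le.
Qed.

Lemma psum_lim n : `|limn psum - psum n| <= B * be ^+ n / (1 - be).
Proof.
rewrite ler_norml; apply/andP; split.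
  rewrite lerBrDr; apply: limr_ge; first exact: psum_cvg.
  near=> m; have nm : (n <= m)%N by near: m; exists n.
  rewrite -lerBrDr.
  by have := psum_diff nm; rewrite ler_norml => /andP[].
rewrite lerBlDr; apply: limr_le; first exact: psum_cvg.
near=> m; have nm : (n <= m)%N by near: m; exists n.
rewrite -lerBlDr.
by have := psum_diff nm; rewrite ler_norml => /andP[].
Unshelve. all: by end_near.
Qed.

End Ser.

Definition bnd {R : realType} d (T : measurableType d) (M : R) (f : T -> R) :=
  measurable_fun setT f /\ forall x, `|f x| <= M.

Lemma bnd_bm {R : realType} d (T : measurableType d) (M : R) (f : T -> R) :
  bnd M f -> bmeas f.
Proof. by move=> [mf hf]; split => //; exists M. Qed.

Section Ops.
Context {R : realType} {dS dA : measure_display}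
  {S : measurableType dS} {A : measurableType dA}.
Variable P : R.-pker (S * A)%type ~> S.
Variable p : R.-pker S ~> A.

Definition inner (f : S -> R) (z : (S * A)%type) := \int[P z]_(s' in setT) f s'.

Lemma inner_bnd M f : bnd M f -> bnd M (inner f).
Proof.
move=> [mf hf].
have mf2 : measurable_fun setT (fun z : (S * A * S)%type => f z.2).
  exact: measurableT_comp.
have [[mi _] bi] := @kint R _ _ _ _ P (fun z => f z.2) M mf2 (fun z => hf z.2).
by split.
Qed.

Lemma pol_bnd M (G : S -> A -> R) :
  measurable_fun setT (fun z => G z.1 z.2) -> (forall s a, `|G s a| <= M) ->
  bnd M (polavg p G).
Proof.
move=> mG hG.
have [[mi _] bi] := @kint R _ _ _ _ p (fun z => G z.1 z.2) M mG (fun z => hG z.1 z.2).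
by split.
Qed.

Lemma Pop_bnd M f : bnd M f -> bnd M (Pop P p f).
Proof.
move=> /inner_bnd [mi hi].
apply: (@pol_bnd M (fun s a => inner f (s, a))) => //.
by rewrite (_ : (fun z => _) = inner f) //; apply/funext => -[].
Qed.

Lemma inner_sec M f s : bnd M f -> bmeas (fun a => inner f (s, a)).
Proof.
move=> /inner_bnd [mi hi]; split; last by exists M.
by apply: measurableT_comp => //; exact: measurable_pair1.
Qed.

Lemma inner_lin Mf Mg f g (c : R) z : bnd Mf f -> bnd Mg g ->
  inner (fun s => c * f s + g s) z = c * inner f z + inner g z.
Proof.
move=> bf bg; rewrite /inner.
have k1 : P z setT = 1%E by apply: prob_kernel.
rewrite bm_add //; last exact: bnd_bm bg.
- by rewrite bm_scale //; exact: bnd_bm bf.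
- case: bf => mf hf; split; last by exists (`|c| * Mf) => x; rewrite normrM ler_wpM2l.
  by apply: measurable_funM => //; exact: measurable_cst.
Qed.

Lemma Pop_lin Mf Mg f g (c : R) s : bnd Mf f -> bnd Mg g ->
  Pop P p (fun s => c * f s + g s) s = c * Pop P p f s + Pop P p g s.
Proof.
move=> bf bg; rewrite /Pop.
have k1 : p s setT = 1%E by apply: prob_kernel.
have -> : \int[p s]_(a in setT) \int[P (s, a)]_(s' in setT) (c * f s' + g s') =
  \int[p s]_(a in setT) (c * inner f (s, a) + inner g (s, a)).
  by apply: eq_Rintegral => a _; rewrite -(inner_lin _ _ bf bg).
rewrite bm_add //; last exact: inner_sec bg.
- by rewrite bm_scale //; exact: inner_sec bf.
- case: (inner_sec s bf) => mf [M hf]; split; last by exists (`|c| * M) => x; rewrite normrM ler_wpM2l.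
  by apply: measurable_funM => //; exact: measurable_cst.
Qed.

Lemma inner_cst c z : inner (fun _ => c) z = c.
Proof. by rewrite /inner bm_cst //; apply: prob_kernel. Qed.

Lemma Pop_cst c s : Pop P p (fun _ => c) s = c.
Proof.
rewrite /Pop.
under eq_Rintegral do rewrite -/(inner (fun _ => c) (s, _)) inner_cst.
by rewrite bm_cst //; apply: prob_kernel.
Qed.

Lemma Pop_le Mf Mg f g s : bnd Mf f -> bnd Mg g -> (forall x, f x <= g x) ->
  Pop P p f s <= Pop P p g s.
Proof.
move=> bf bg fg; rewrite /Pop.
have k1 : p s setT = 1%E by apply: prob_kernel.
apply: bm_le => //; [exact: inner_sec bf | exact: inner_sec bg|].
move=> a; rewrite -!/(inner _ (s, a)) /inner.
apply: bm_le; [exact: prob_kernel | exact: bnd_bm bf | exact: bnd_bm bg | exact: fg].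
Qed.

End Ops.

Section Val.
Context {R : realType} {dS dA : measure_display}
  {S : measurableType dS} {A : measurableType dA}.
Variable P : R.-pker (S * A)%type ~> S.
Variable p : R.-pker S ~> A.
Variable be : R.
Hypothesis be0 : 0 <= be.
Hypothesis be1 : be < 1.
Variable rr : S -> A -> R.
Variable M : R.
Hypothesis mrr : measurable_fun setT (fun z => rr z.1 z.2).
Hypothesis hrr : forall s a, `|rr s a| <= M.

Let Q := Pop P p.
Definition ut t := iter t Q (polavg p rr).
Definition Sn n := fun s => \sum_(0 <= t < n) be ^+ t * ut t s.

Lemma ut_bnd t : bnd M (ut t).
Proof.
elim: t => [|t IH]; first exact: pol_bnd.
exact: Pop_bnd.
Qed.

Lemma M0 : 0 <= M.
Proof. by have := hrr point point; apply: le_trans. Qed.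

Lemma a_bnd s t : `|be ^+ t * ut t s| <= M * be ^+ t.
Proof.
rewrite normrM ger0_norm ?exprn_ge0 // mulrC ler_wpM2r ?exprn_ge0 //.
by case: (ut_bnd t).
Qed.

Lemma V_approx n s : `|value be P rr p s - Sn n s| <= M * be ^+ n / (1 - be).
Proof. exact: (psum_lim be0 be1 (a_bnd s)). Qed.

Lemma Sn_bnd n : bnd (M / (1 - be)) (Sn n).
Proof.
split.
  apply: measurable_sum => t; apply: measurable_funM; first exact: measurable_cst.
  by case: (ut_bnd t).
move=> s; rewrite /Sn.
have b1 : 0 < 1 - be by rewrite subr_gt0.
apply: le_trans (ler_norm_sum _ _ _) _.
apply: le_trans (ler_sum _ (fun t _ => a_bnd s t)) _.
rewrite -mulr_sumr ler_pdivlMr // -mulrA ler_piMr ?M0 //.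
by rewrite mulrC; have := geo_tail_le be0 0 n; rewrite expr0.
Qed.



Lemma V_bnd : bnd (M / (1 - be)) (value be P rr p).
Proof.
split.
  apply: (measurable_fun_cvg (h := Sn)).
    by move=> n; case: (Sn_bnd n).
  move=> s _; exact: (psum_cvg be0 be1 (a_bnd s)).
move=> s; have := V_approx 0 s.
by rewrite /Sn big_geq // subr0 expr0 mulr1.
Qed.


Lemma Sn0 : Sn 0 = fun _ => 0.
Proof. by apply/funext => s; rewrite /Sn big_geq. Qed.

Lemma SnS n : Sn n.+1 = fun s => be ^+ n * ut n s + Sn n s.
Proof. by apply/funext => s; rewrite /Sn big_nat_recr //= addrC. Qed.

Lemma Pop_Sn n s : Q (Sn n) s = \sum_(0 <= t < n) be ^+ t * ut t.+1 s.
Proof.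
elim: n => [|n IH]; first by rewrite Sn0 /Q Pop_cst big_geq.
rewrite SnS /Q (@Pop_lin _ _ _ _ _ P p _ _ _ _ _ _ (ut_bnd n) (Sn_bnd n)) -/Q IH.
by rewrite big_nat_recr //= addrC.
Qed.

Lemma S_rec n s : Sn n.+1 s = polavg p rr s + be * Q (Sn n) s.
Proof.
rewrite Pop_Sn /Sn big_nat_recl //= expr0 mul1r; congr (_ + _).
by rewrite mulr_sumr; apply: eq_bigr => t _; rewrite exprS mulrA.
Qed.

Lemma Bellman s : value be P rr p s = polavg p rr s + be * Q (value be P rr p) s.
Proof.
set V := value be P rr p.
have b1 : 0 < 1 - be by rewrite subr_gt0.
have K0 : 0 <= M / (1 - be) by rewrite divr_ge0 ?M0 ?ltW.
have D n : `|V s - (polavg p rr s + be * Q V s)| <= (2 * (M / (1 - be))) * be ^+ n.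
  have E1 : V s - (polavg p rr s + be * Q V s) =
     (V s - Sn n.+1 s) + be * (Q (Sn n) s - Q V s).
    by rewrite S_rec; ring.
  have bdiff : bnd (M * be ^+ n / (1 - be)) (fun x => -1 * Sn n x + V x).
    split.
      apply: measurable_funD; last by case: V_bnd.
      apply: measurable_funM; first exact: measurable_cst.
      by case: (Sn_bnd n).
    by move=> x; rewrite mulN1r addrC; exact: V_approx.
  have E2 : Q (fun x => -1 * Sn n x + V x) s = - (Q (Sn n) s - Q V s).
    by rewrite /Q (@Pop_lin _ _ _ _ _ P p _ _ _ _ _ _ (Sn_bnd n) V_bnd); ring.
  have H2 : `|Q (Sn n) s - Q V s| <= M * be ^+ n / (1 - be).
    by rewrite -normrN -E2; case: (Pop_bnd P p bdiff) => _; apply.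
  have H1 : `|V s - Sn n.+1 s| <= M * be ^+ n.+1 / (1 - be) by exact: V_approx.
  rewrite E1; apply: le_trans (ler_normD _ _) _.
  rewrite normrM ger0_norm //.
  have H3 : be * `|Q (Sn n) s - Q V s| <= M / (1 - be) * be ^+ n.
    apply: le_trans (ler_wpM2l be0 H2) _.
    have -> : M * be ^+ n / (1 - be) = M / (1 - be) * be ^+ n by rewrite mulrAC.
    by apply: ler_piMl; [rewrite mulr_ge0 ?exprn_ge0 | exact: ltW].
  have H4 : M * be ^+ n.+1 / (1 - be) <= M / (1 - be) * be ^+ n.
    have -> : M * be ^+ n.+1 / (1 - be) = be * (M / (1 - be) * be ^+ n).
      by rewrite exprS; ring.
    by apply: ler_piMl; [rewrite mulr_ge0 ?exprn_ge0 | exact: ltW].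
  lra.
apply/eqP; rewrite eq_le; apply/andP; split.
  apply: (eps_le be0 be1 (K := 2 * (M / (1 - be)))) => n.
  by have := D n; rewrite ler_norml => /andP[_]; lra.
apply: (eps_le be0 be1 (K := 2 * (M / (1 - be)))) => n.
by have := D n; rewrite ler_norml => /andP[+ _]; lra.
Qed.

End Val.

Lemma bm_ub {R : realType} d (T : measurableType d) (mu : {measure set T -> \bar R})
  (mu1 : mu setT = 1%E) B f C : bnd B f -> (forall x, f x <= C) ->
  \int[mu]_(x in setT) f x <= C.
Proof.
move=> bf fC; rewrite -[X in _ <= X](bm_cst mu1 C); apply: bm_le => //.
  exact: bnd_bm bf.
by split; [exact: measurable_cst | exists `|C|].
Qed.

Lemma bm_lb {R : realType} d (T : measurableType d) (mu : {measure set T -> \bar R})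
  (mu1 : mu setT = 1%E) B f C : bnd B f -> (forall x, C <= f x) ->
  C <= \int[mu]_(x in setT) f x.
Proof.
move=> bf fC; rewrite -[X in X <= _](bm_cst mu1 C); apply: bm_le => //.
  by split; [exact: measurable_cst | exists `|C|].
exact: bnd_bm bf.
Qed.

Lemma bm_nrm {R : realType} d (T : measurableType d) (mu : {measure set T -> \bar R})
  (mu1 : mu setT = 1%E) B f : bnd B f -> `|\int[mu]_(x in setT) f x| <= B.
Proof.
move=> bf; rewrite ler_norml; apply/andP; split.
  by apply: (bm_lb mu1 bf) => x; case: bf => _ /(_ x); rewrite ler_norml => /andP[].
by apply: (bm_ub mu1 bf) => x; case: bf => _ /(_ x); rewrite ler_norml => /andP[].
Qed.

Section Ops2.
Context {R : realType} {dS dA : measure_display}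
  {S : measurableType dS} {A : measurableType dA}.
Variable P : R.-pker (S * A)%type ~> S.
Variable p : R.-pker S ~> A.

Lemma Pop_addc M f c s : bnd M f -> Pop P p (fun x => f x + c) s = Pop P p f s + c.
Proof.
move=> bf.
have bc : bnd `|c| (fun _ : S => c) by split; [exact: measurable_cst|].
have := @Pop_lin _ _ _ _ _ P p _ _ _ _ 1 s bf bc.
rewrite mul1r Pop_cst => <-.
by congr Pop; apply/funext => x; rewrite mul1r.
Qed.

Lemma Pop_ge M f c s : bnd M f -> (forall x, c <= f x) -> c <= Pop P p f s.
Proof.
move=> bf fc.
have bc : bnd `|c| (fun _ : S => c) by split; [exact: measurable_cst|].
by rewrite -[X in X <= _](Pop_cst P p c s); apply: (Pop_le _ _ _ bc bf).
Qed.

Lemma Pop_le_c M f c s : bnd M f -> (forall x, f x <= c) -> Pop P p f s <= c.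
Proof.
move=> bf fc.
have bc : bnd `|c| (fun _ : S => c) by split; [exact: measurable_cst|].
by rewrite -[X in _ <= X](Pop_cst P p c s); apply: (Pop_le _ _ _ bf bc).
Qed.

Lemma supersol (be : R) B w : 0 <= be -> be < 1 -> bnd B w ->
  (forall s, be * Pop P p w s <= w s) -> forall s, 0 <= w s.
Proof.
move=> be0 be1 bw hw.
have B0 : 0 <= B by case: bw => _ /(_ point); apply: le_trans.
have H n : forall s, - (B * be ^+ n) <= w s.
  elim: n => [|n IH] s.
    by rewrite expr0 mulr1; case: bw => _ /(_ s); rewrite ler_norml => /andP[].
  apply: le_trans (hw s).
  have := Pop_ge s bw IH => H1.
  rewrite exprS mulrCA -mulrN; exact: ler_wpM2l.
move=> s; apply: (eps_le be0 be1 (K := B)) => n.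
by have := H n s; rewrite lerNl => H1; rewrite -lerBlDr sub0r.
Qed.

End Ops2.

Section Main.
Context {R : realType} {dS dA : measure_display}
  {S : measurableType dS} {A : measurableType dA}.
Variable P : R.-pker (S * A)%type ~> S.
Variables (r : S -> A -> R) (g : R) (d0 : probability S R).
Variables (pistar pitstar pi : R.-pker S ~> A) (h : S -> R) (lam : R) (Mh : R).
Hypothesis mr : measurable_fun [set: (S * A)%type] (fun sa => r sa.1 sa.2).
Hypothesis r01 : forall s a, 0 <= r s a <= 1.
Hypothesis g0 : 0 <= g.
Hypothesis g1 : g < 1.
Let rt := reshaped_reward g lam P r h.
Hypothesis topt : forall (p : R.-pker S ~> A) s,
      value (lam * g) P rt p s <= value (lam * g) P rt pitstar s.
Hypothesis mh : measurable_fun [set: S] h.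
Hypothesis hMh : forall s, `|h s| <= Mh.
Hypothesis lam0 : 0 <= lam.
Hypothesis lam1 : lam <= 1.

Let V := value g P r pistar.
Let Vt := value (lam * g) P rt pitstar.
Let W := value (lam * g) P rt pistar.
Let be := lam * g.

Lemma be0 : 0 <= be. Proof. exact: mulr_ge0. Qed.
Lemma be1 : be < 1.
Proof. by apply: le_lt_trans g1; rewrite /be ler_piMl. Qed.

Lemma hr1 s a : `|r s a| <= 1.
Proof. by have /andP[r0 r1] := r01 s a; rewrite ger0_norm. Qed.

Lemma Mh0 : 0 <= Mh. Proof. by apply: le_trans (hMh point). Qed.

Lemma bh : bnd Mh h. Proof. by split. Qed.

Let L := (1 - lam) * g.
Lemma L0 : 0 <= L. Proof. by rewrite mulr_ge0 // subr_ge0. Qed.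

Let Mrt := 1 + L * Mh.

Lemma mrt : measurable_fun setT (fun z => rt z.1 z.2).
Proof.
have -> : (fun z => rt z.1 z.2) = (fun z => r z.1 z.2 + L * inner P h z).
  by apply/funext => -[].
apply: measurable_funD => //; apply: measurable_funM; first exact: measurable_cst.
by case: (inner_bnd P bh).
Qed.

Lemma hrt s a : `|rt s a| <= Mrt.
Proof.
rewrite /rt /reshaped_reward; apply: le_trans (ler_normD _ _) _.
apply: lerD; first exact: hr1.
rewrite normrM ger0_norm; last exact: L0.
apply: ler_wpM2l; first exact: L0.
by case: (inner_bnd P bh) => _ /(_ (s, a)).
Qed.

Lemma bV : bnd (1 / (1 - g)) V.
Proof. exact: (V_bnd P pistar g0 g1 mr hr1). Qed.

Lemma bVt : bnd (Mrt / (1 - be)) Vt.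
Proof. exact: (V_bnd P pitstar be0 be1 mrt hrt). Qed.

Lemma bW : bnd (Mrt / (1 - be)) W.
Proof. exact: (V_bnd P pistar be0 be1 mrt hrt). Qed.


Lemma pol_rt s : polavg pistar rt s =
  polavg pistar r s + L * Pop P pistar h s.
Proof.
rewrite /polavg /rt /reshaped_reward /Pop.
have k1 : pistar s setT = 1%E by apply: prob_kernel.
have br : bmeas (fun a => r s a).
  split; last by exists 1 => a; exact: hr1.
  have -> : (fun a => r s a) = (fun z => r z.1 z.2) \o pair s by [].
  by apply: measurableT_comp => //; exact: measurable_pair1.
have bi := inner_sec P s bh.
rewrite bm_add //.
  by rewrite (bm_scale k1 _ bi).
case: bi => mi [Mi hMi]; split.
  by apply: measurable_funM => //; exact: measurable_cst.
exists (L * Mi) => a; rewrite normrM (ger0_norm L0); apply: ler_wpM2l; [exact: L0 | exact: hMi].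
Qed.

Variables (b e' : R).
Hypothesis e'0 : 0 <= e'.
Hypothesis hb : forall s, `|h s + b - V s| <= e'.

Lemma h_lo s : V s - b - e' <= h s.
Proof. by have := hb s; rewrite ler_norml => /andP[H _]; lra. Qed.
Lemma h_hi s : h s <= V s - b + e'.
Proof. by have := hb s; rewrite ler_norml => /andP[_ H]; lra. Qed.

Let d := L * (- b - e') / (1 - be).
Let u := fun s => V s + d.

Lemma bu : bnd (1 / (1 - g) + `|d|) u.
Proof.
case: bV => mV hV; split.
  by apply: measurable_funD => //; exact: measurable_cst.
by move=> s; apply: le_trans (ler_normD _ _) _; apply: lerD.
Qed.

Lemma u_sub s : u s <= polavg pistar rt s + be * Pop P pistar u s.
Proof.
rewrite pol_rt /u (@Pop_addc _ _ _ _ _ P pistar _ _ _ s bV).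
have H1 : Pop P pistar V s + (- b - e') <= Pop P pistar h s.
  have bc : bnd (1 / (1 - g) + `|- b - e'|) (fun x => V x + (- b - e')).
    case: bV => mV hV; split.
      by apply: measurable_funD => //; exact: measurable_cst.
    by move=> x; apply: le_trans (ler_normD _ _) _; apply: lerD.
  rewrite -(@Pop_addc _ _ _ _ _ P pistar _ _ _ s bV); apply: (@Pop_le _ _ _ _ _ P pistar _ _ _ _ s bc bh).
  by move=> x; have := h_lo x; lra.
have H2 := ler_wpM2l L0 H1.
have E0 := Bellman P pistar g0 g1 mr hr1 s.
rewrite -/V in E0.
have b1 : 1 - be != 0 by rewrite subr_eq0 eq_sym lt_eqF // be1.
have E1 : g * Pop P pistar V s = L * Pop P pistar V s + be * Pop P pistar V s.
  by rewrite /L /be; ring.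
have E2 : d = L * (- b - e') + be * d.
  rewrite /d; field; exact: b1.
have E3 : L * (Pop P pistar V s + (- b - e')) = L * Pop P pistar V s + L * (- b - e').
  by ring.
have E4 : be * (Pop P pistar V s + d) = be * Pop P pistar V s + be * d by ring.
rewrite E4; lra.
Qed.


Lemma W_ge s : u s <= W s.
Proof.
pose w := fun x => -1 * u x + W x.
have bw : bnd (Mrt / (1 - be) + (1 / (1 - g) + `|d|)) w.
  case: bu => mu hu; case: bW => mW hW; split.
    apply: measurable_funD => //; apply: measurable_funM => //; exact: measurable_cst.
  move=> x; rewrite /w mulN1r; apply: le_trans (ler_normD _ _) _.
  by rewrite normrN addrC; apply: lerD.
have hw : forall x, be * Pop P pistar w x <= w x.
  move=> x; rewrite /w (@Pop_lin _ _ _ _ _ P pistar _ _ _ _ (-1) x bu bW).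
  have E := Bellman P pistar be0 be1 mrt hrt x.
  rewrite -/W in E.
  have := u_sub x.
  have E2 : be * (-1 * Pop P pistar u x + Pop P pistar W x) =
      - (be * Pop P pistar u x) + be * Pop P pistar W x by ring.
  rewrite E2; lra.
have := supersol be0 be1 bw hw s.
rewrite /w; lra.
Qed.

Lemma Vt_ge s : V s + d <= Vt s.
Proof. exact: le_trans (W_ge s) (topt pistar s). Qed.


Lemma d01 : d0 setT = 1%E. Proof. exact: probability_setT. Qed.

Lemma at_diff : at_dist d0 V - at_dist d0 Vt <= - d.
Proof.
have bc : bnd (Mrt / (1 - be) + `|- d|) (fun s => Vt s + - d).
  case: bVt => m hm; split.
    by apply: measurable_funD => //; exact: measurable_cst.
  by move=> x; apply: le_trans (ler_normD _ _) _; apply: lerD.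
have H : at_dist d0 V <= at_dist d0 (fun s => Vt s + - d).
  apply: (bm_le d01 (bnd_bm bV) (bnd_bm bc)) => x.
  by have := Vt_ge x; lra.
have E : at_dist d0 (fun s => Vt s + - d) = at_dist d0 Vt + - d.
  have bcst : bmeas (fun _ : S => - d) by split; [exact: measurable_cst | exists `|- d|].
  by rewrite /at_dist (bm_add d01 (bnd_bm bVt) bcst) (bm_cst d01).
lra.
Qed.

Let C := - b + e' - d.
Let Gf := fun s' => h s' - Vt s'.
Let Bo := Mh + Mrt / (1 - be).

Lemma bGf : bnd Bo Gf.
Proof.
case: bVt => m hm; split; first exact: measurable_funB.
by move=> x; apply: le_trans (ler_normB _ _) _; apply: lerD.
Qed.

Lemma Gf_le x : Gf x <= C.
Proof. by have := h_hi x; have := Vt_ge x; rewrite /Gf /C; lra. Qed.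

Let G := fun s a => \int[P (s, a)]_(s' in setT) (h s' - Vt s').

Lemma inner_le z : inner P Gf z <= C.
Proof. by apply: (bm_ub _ bGf Gf_le); apply: prob_kernel. Qed.

Lemma bpolG : bnd Bo (polavg pi G).
Proof.
case: (inner_bnd P bGf) => mi hi.
apply: pol_bnd.
  by rewrite (_ : (fun z => _) = inner P Gf) //; apply/funext => -[].
by move=> s a; exact: hi.
Qed.

Lemma polG_le s : polavg pi G s <= C.
Proof.
have bs : bnd Bo (fun a => inner P Gf (s, a)).
  case: (inner_sec P s bGf) => ms _; split => // a.
  by case: (inner_bnd P bGf) => _; apply.
by apply: (bm_ub _ bs (fun a => inner_le (s, a))); apply: prob_kernel.
Qed.

Let it t := iter t (Pop P pi) (polavg pi G).

Lemma it_bnd t : bnd Bo (it t) /\ forall s, it t s <= C.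
Proof.
elim: t => [|t [IH1 IH2]]; first by split; [exact: bpolG | exact: polG_le].
split; first exact: Pop_bnd.
move=> s; exact: (@Pop_le_c _ _ _ _ _ P pi _ _ _ s IH1 IH2).
Qed.

Lemma occ_le : occ_exp g P d0 pi G <= C.
Proof.
pose x t := at_dist d0 (it t).
pose a t := g ^+ t * x t.
have ha t : `|a t| <= Bo * g ^+ t.
  rewrite /a normrM ger0_norm ?exprn_ge0 // mulrC ler_wpM2r ?exprn_ge0 //.
  by apply: (bm_nrm d01); case: (it_bnd t).
have hxC t : x t <= C by case: (it_bnd t) => b1 b2; exact: (bm_ub d01 b1 b2).
have b1 : 0 < 1 - g by rewrite subr_gt0.
have hp n : (1 - g) * psum a n <= C * (1 - g ^+ n).
  have H1 : psum a n <= C * \sum_(0 <= t < n) g ^+ t.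
    rewrite /psum mulr_sumr; apply: ler_sum => t _.
    by rewrite /a mulrC ler_wpM2r ?exprn_ge0.
  have := @geo_tail _ g 0 n (leq0n n); rewrite expr0 => E.
  have := ler_wpM2l (ltW b1) H1.
  by rewrite mulrCA E.
have hl n := psum_lim g0 g1 ha n.
rewrite /occ_exp -/(psum a).
apply: (eps_le g0 g1 (K := Bo - C)) => n.
have := hl n; rewrite ler_norml => /andP[_ H].
have H2 := ler_wpM2l (ltW b1) H.
have E1 : (1 - g) * (Bo * g ^+ n / (1 - g)) = Bo * g ^+ n.
  by field; rewrite subr_eq0 eq_sym lt_eqF.
have E2 : (1 - g) * (limn (psum a) - psum a n) = (1 - g) * limn (psum a) - (1 - g) * psum a n.
  by ring.
have E3 : C * (1 - g ^+ n) = C - C * g ^+ n by ring.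
have E4 : (Bo - C) * g ^+ n = Bo * g ^+ n - C * g ^+ n by ring.
have := hp n; rewrite E3 E4; move: H2; rewrite E1 E2; lra.
Qed.


Lemma core : Bias g lam P d0 h V Vt pi <= 2 * (g * (1 - lam) / (1 - g)) * e'.
Proof.
have b1 : 0 < 1 - g by rewrite subr_gt0.
have hK : 0 <= g * (1 - lam) / (1 - g).
  by rewrite divr_ge0 ?mulr_ge0 ?subr_ge0 // ltW.
rewrite /Bias; apply: le_trans (lerD at_diff (ler_wpM2l hK occ_le)) _.
have gn : 1 - g != 0 by rewrite subr_eq0 eq_sym lt_eqF.
have bn : 1 - lam * g != 0 by rewrite subr_eq0 eq_sym lt_eqF // be1.
rewrite /C /d /L /be.
rewrite le_eqVlt; apply/orP; left; apply/eqP; field.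
by apply/andP; split.
Qed.

End Main.

Unset Implicit Arguments.

Theorem corollary1 (R : realType) (dS dA : measure_display)
  (S : measurableType dS) (A : measurableType dA)
  (P : R.-pker (S * A)%type ~> S) (r : S -> A -> R) (g : R)
  (d0 : probability S R)
  (pistar pitstar : R.-pker S ~> A)
  (h : S -> R) (lam : R) (pi : R.-pker S ~> A) (eps : R) :
  measurable_fun [set: (S * A)%type] (fun sa => r sa.1 sa.2) ->
  (forall s a, 0 <= r s a <= 1) ->
  0 <= g < 1 ->
  (* pistar is an optimal policy of M *)
  (forall (p : R.-pker S ~> A) s, value g P r p s <= value g P r pistar s) ->
  (* pitstar is an optimal policy of the reshaped MDP M~ *)
  (forall (p : R.-pker S ~> A) s,
      value (lam * g) P (reshaped_reward g lam P r h) p s <=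
      value (lam * g) P (reshaped_reward g lam P r h) pitstar s) ->
  (* h bounded (and measurable) *)
  measurable_fun [set: S] h ->
  (exists M : R, forall s, `|h s| <= M) ->
  0 <= lam <= 1 ->
  0 <= eps ->
  (ereal_inf [set ereal_sup [set (`|h s + b - value g P r pistar s|)%:E | s in [set: S]]
             | b in [set: R]] <= eps%:E)%E ->
  Bias g lam P d0 h (value g P r pistar)
       (value (lam * g) P (reshaped_reward g lam P r h) pitstar) pi
  <= (1 - lam * g) ^+ 2 / (1 - g) ^+ 2 * eps.
Proof.
move=> mr r01 /andP[g0 g1] _ topt mh [Mh hMh] /andP[lam0 lam1] eps0 hinf.
set K' := g * (1 - lam) / (1 - g).
set Kf := (1 - lam * g) ^+ 2 / (1 - g) ^+ 2.
have gn : 1 - g != 0 by rewrite subr_eq0 eq_sym lt_eqF.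
have hK : 2 * K' <= Kf.
  rewrite -subr_ge0.
  have -> : Kf - 2 * K' = ((g * (1 - lam)) ^+ 2 + (1 - g) ^+ 2) / (1 - g) ^+ 2.
    by rewrite /Kf /K'; field.
  by rewrite divr_ge0 ?addr_ge0 ?sqr_ge0.
have half0 : 0 <= 1 / 2 :> R by rewrite divr_ge0.
have half1 : 1 / 2 < 1 :> R by rewrite ltr_pdivrMr // mul1r ltr1n.
apply: (eps_le half0 half1 (K := Kf)) => n.
have eta0 : 0 < (1 / 2 : R) ^+ n by rewrite exprn_gt0 // divr_gt0.
have [b hb] : exists b, forall s, `|h s + b - value g P r pistar s| <= eps + (1 / 2) ^+ n.
  have : (ereal_inf [set ereal_sup [set (`|h s + b - value g P r pistar s|)%:E | s in [set: S]]
             | b in [set: R]] < (eps + (1 / 2) ^+ n)%:E)%E.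
    by apply: le_lt_trans hinf _; rewrite lte_fin ltrDl.
  move=> /ereal_inf_lt [y [b _ <-] ylt]; exists b => s.
  have H : ((`|h s + b - value g P r pistar s|)%:E <=
      ereal_sup [set (`|h s + b - value g P r pistar s|)%:E | s in [set: S]])%E.
    by apply: ereal_sup_ubound; exists s.
  by rewrite -lee_fin; apply: le_trans H (ltW ylt).
have := core d0 pi mr r01 g0 g1 topt mh hMh lam0 lam1 hb.
rewrite -/K' => H; apply: le_trans H _.
rewrite -mulrDr; apply: ler_wpM2r => //.
by rewrite addr_ge0 // ltW.
Qed.
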